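(* Let $G$ be a graph whose $\operatorname{IR}$-graph $H=G(\operatorname{IR})$ is connected, and let $k\geq 3$. If $G$ has an $\operatorname{IR}(G)$-set $X$ containing $k$ vertices each of positive degree in $G[X]$, or containing $k$ vertices each having an $X$-external private neighbour, then $\operatorname{diam}(H)\geq k$.
   Context: All graphs are finite and simple. For $G=(V,E)$, $D\subseteq V$, $v\in D$: $\operatorname{PN}(v,D)=N[v]-N[D-\{v\}]$ and $\operatorname{EPN}(v,D)=\operatorname{PN}(v,D)-D$; elements of $\operatorname{EPN}(v,D)$ are the $D$-external private neighbours of $v$. $D$ is irredundant if $\operatorname{PN}(v,D)\neq\varnothing$ for all $v\in D$; $\operatorname{IR}(G)$ is the maximum size of an irredundant set; an $\operatorname{IR}(G)$-set is an irredundant set of that size. $G(\operatorname{IR})$ has the $\operatorname{IR}(G)$-sets as vertices, with $D\sim D'$ iff there exist $u\in D$, $v\in D'$ with $uv\in E(G)$ and $D'=(D-\{u\})\cup\{v\}$. *)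

(* Defs.v *)
(* A simple graph G = (T, e): e symmetric and irreflexive on a finType T. *)
From mathcomp Require Import all_boot.
Set Implicit Arguments. Unset Strict Implicit. Unset Printing Implicit Defensive.

Section Graph.
Variables (T : finType) (e : rel T).

Definition cnbhd (v : T) : {set T} := [set w | (w == v) || e v w].
Definition cnbhdS (S : {set T}) : {set T} := \bigcup_(v in S) cnbhd v.

Definition PN (v : T) (D : {set T}) : {set T} := cnbhd v :\: cnbhdS (D :\ v).
Definition EPN (v : T) (D : {set T}) : {set T} := PN v D :\: D.

Definition irredundant (D : {set T}) : bool := [forall v in D, PN v D != set0].

Definition IRnum : nat := \max_(D : {set T} | irredundant D) #|D|.

Definition IRset (D : {set T}) : bool := irredundant D && (#|D| == IRnum).

Definition IRadj : rel {set T} := fun D D' =>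
  [&& IRset D, IRset D' &
   [exists u in D, exists v in D', e u v && (D' == (D :\ u) :|: [set v])]].

Definition IRgraph_connected : Prop :=
  forall D D', IRset D -> IRset D' -> connect IRadj D D'.

Fixpoint ball (n : nat) (D : {set {set T}}) : {set {set T}} :=
  match n with
  | 0 => D
  | n'.+1 => ball n' D :|: [set D' | [exists D0 in ball n' D, IRadj D0 D']]
  end.

(* distance in G(IR); correct whenever D' is reachable from D, since any
   shortest path has fewer than #|{set T}| edges *)
Definition IRdist (D D' : {set T}) : nat :=
  find (fun n => D' \in ball n [set D]) (iota 0 #|{set T}|).

Definition IRdiam : nat :=
  \max_(D : {set T} | IRset D) \max_(D' : {set T} | IRset D') IRdist D D'.

End Graph.

(* Main.v *)
Require Import Defs.
From mathcomp Require Import all_boot.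

Section Aux.
Variables (T : finType) (e : rel T).

Lemma mem_cnbhd v w : (w \in cnbhd e v) = (w == v) || e v w.
Proof. by rewrite inE. Qed.

Lemma PNP v (D : {set T}) w : reflect (((w == v) || e v w) /\
   forall u, u \in D -> u != v -> ~~ ((w == u) || e u w)) (w \in PN e v D).
Proof.
rewrite /PN inE andbC mem_cnbhd.
apply: (iffP andP) => [[H1 H2]|[H1 H2]]; split => //.
- move=> u uD uv; apply/negP => Hw; move/negP: H2; apply.
  by apply/bigcupP; exists u; [rewrite !inE uv uD | rewrite mem_cnbhd].
- apply/negP => /bigcupP [u]; rewrite !inE => /andP[uv uD].
  by rewrite -mem_cnbhd; apply/negP; rewrite mem_cnbhd; apply: H2.
Qed.

Lemma ball_bound (X : {set T}) n (D : {set T}) : D \in ball e n [set X] -> #|X :\: D| <= n.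
Proof.
elim: n D => [|n IH] D /=.
  by rewrite inE => /eqP ->; rewrite setDv cards0.
rewrite inE => /orP[/IH H|]; first by apply: leqW.
rewrite inE => /existsP[D0 /andP[HD0 /and3P[_ _ /existsP[u /andP[uD0
   /existsP[v /andP[vD /andP[_ /eqP ->]]]]]]]].
have H1 : X :\: (D0 :\ u :|: [set v]) \subset (X :\: D0) :|: [set u].
  apply/subsetP => x; rewrite !inE.
  by case: (x == u); case: (x \in D0); case: (x \in X); case: (x == v).
apply: leq_trans (subset_leq_card H1) _.
by apply: leq_trans (leq_card_setU _ _).1 _; rewrite cards1 addn1 ltnS; apply: IH.
Qed.

Lemma dist_bound (X Y : {set T}) : #|X :\: Y| <= IRdist e X Y.
Proof.
rewrite /IRdist.
set p := (fun n => Y \in ball e n [set X]).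
set s := iota 0 #|{set T}|.
case: (boolP (has p s)) => Hh.
  have := nth_find 0 Hh; rewrite /s nth_iota ?add0n; last first.
    by have := Hh; rewrite has_find /s size_iota.
  by move/ball_bound.
rewrite (hasNfind Hh) size_iota.
apply: leq_trans (max_card _) _.
apply: leq_trans (ltnW (ltn_expl _ (isT : 1 < 2))) _.
rewrite -cardsT -(card_powerset [set: T]).
exact: max_card.
Qed.

End Aux.

Theorem corollary4p4 (T : finType) (e : rel T) (esym : symmetric e)
  (eirr : irreflexive e) (k : nat) (X : {set T}) :
  IRgraph_connected e -> 3 <= k -> IRset e X ->
  ((exists S : {set T}, [/\ S \subset X, #|S| = k &
        forall x, x \in S -> exists2 y, y \in X & e x y])
   \/ (exists S : {set T}, [/\ S \subset X, #|S| = k &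
        forall x, x \in S -> EPN e x X != set0])) ->
  k <= IRdiam e.
Proof.
move=> _ _ HX Hcase.
have /andP[Xirr /eqP XIR] := HX.
have Xpn : forall v, v \in X -> exists w, w \in PN e v X.
  move=> v vX; move/forallP: Xirr => /(_ v); rewrite vX /= => /set0Pn.
  by case=> w Hw; exists w.
have [S [SX Sk SE]] : exists S : {set T}, [/\ S \subset X, #|S| = k &
        forall x, x \in S -> EPN e x X != set0].
  case: Hcase => // [[S [SX Sk SN]]]; exists S; split => // x xS.
  have xX : x \in X by apply: (subsetP SX).
  have [y yX exy] := SN x xS.
  have [w /PNP [Hw1 Hw2]] := Xpn x xX.
  apply/set0Pn; exists w; rewrite /EPN inE.
  have wPN : w \in PN e x X by apply/PNP.
  rewrite wPN andbT.
  have yx : y != x by apply: contraTneq exy => ->; rewrite eirr.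
  apply/negP => wX.
  case: (eqVneq w x) => [wx|wx].
    subst w; have := Hw2 y yX yx; by rewrite esym exy orbT.
  have := Hw2 w wX wx; by rewrite eqxx.
pose M := [set x in X | EPN e x X != set0].
have SM : S \subset M.
  by apply/subsetP => x xS; rewrite inE (subsetP SX) //= SE.
pose f x := odflt x [pick w in EPN e x X].
have fP : forall x, x \in M -> f x \in EPN e x X.
  move=> x; rewrite inE => /andP[_ /set0Pn [w Hw]].
  rewrite /f; case: pickP => [w' -> //|/(_ w)]; by rewrite Hw.
have fnX : forall x, x \in M -> f x \notin X.
  by move=> x /fP; rewrite inE => /andP[].
have fadj : forall x, x \in M -> e x (f x).
  move=> x xM; have := fP x xM; rewrite inE => /andP[_ /PNP [H _]].
  move: H => /orP[/eqP H|//]; have := fnX x xM; rewrite H.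
  by move: xM; rewrite inE => /andP[->].
have fpriv : forall x u, x \in M -> u \in X -> u != x ->
    (f x != u) && ~~ e u (f x).
  move=> x u xM uX ux; have := fP x xM; rewrite inE => /andP[_ /PNP [_ H]].
  by have := H u uX ux; rewrite negb_or.
have Ziso : forall z u, z \in X -> z \notin M -> u \in X -> u != z -> ~~ e u z.
  move=> z u zX zM uX uz.
  have [w wP] := Xpn z zX.
  have wX : w \in X.
    apply: contraR zM => wX; rewrite inE zX /=; apply/set0Pn; exists w.
    by rewrite inE wX wP.
  move/PNP: wP => [_ H].
  case: (eqVneq w z) => [wz|wz].
    by subst w; have := H u uX uz; rewrite negb_or => /andP[].
  by have := H w wX wz; rewrite eqxx.
have MX : M \subset X by apply/subsetP => x; rewrite inE => /andP[].
pose Y := (X :\: M) :|: f @: M.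
have finj : {in M &, injective f}.
  move=> x1 x2 x1M x2M Hf; apply/eqP; apply/negP => /negP H.
  have x21 : x2 != x1 by rewrite eq_sym.
  have := fpriv x1 x2 x1M (subsetP MX _ x2M) x21 => /andP[_].
  by rewrite Hf fadj.
have cardY : #|Y| = #|X|.
  rewrite cardsU.
  have -> : (X :\: M) :&: (f @: M) = set0.
    apply/setP => w; rewrite !inE; apply/negP => /andP[/andP[_ wX] /imsetP [x xM wfx]].
    by move: wX; rewrite wfx (negbTE (fnX x xM)).
  rewrite cards0 subn0 card_in_imset // cardsD (setIidPr MX).
  by rewrite subnK // subset_leq_card.
have Yirr : irredundant e Y.
  apply/forallP => y; apply/implyP; rewrite inE => /orP[|].
    rewrite inE => /andP[zM zX]; apply/set0Pn; exists y; apply/PNP; split.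
      by rewrite eqxx.
    move=> u; rewrite !inE => /orP[/andP[uM uX] uz|/imsetP[x xM ->] _].
      by rewrite negb_or eq_sym uz /= Ziso.
    have xz : y != x by apply: contraNneq zM => ->.
    have := fpriv x y xM zX xz; rewrite negb_or => /andP[H1 H2].
    by rewrite eq_sym H1 esym H2.
  move=> /imsetP[x xM ->]; apply/set0Pn; exists x; apply/PNP; split.
    by apply/orP; right; rewrite esym fadj.
  have xX : x \in X by apply: (subsetP MX).
  move=> u; rewrite !inE => /orP[/andP[uM uX] _|/imsetP[x2 x2M ->] Hne].
    have ux : u != x.
      by apply/eqP => ux; move: uM; rewrite ux; move: xM; rewrite inE => ->.
    rewrite negb_or; apply/andP; split; first by rewrite eq_sym.
    have xu : x != u by rewrite eq_sym.
    have uM2 : u \notin M by rewrite inE.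
    by rewrite esym (Ziso u x uX uM2 xX xu).
  have x2x : x2 != x by apply: contraNneq Hne => ->.
  have xx2 : x != x2 by rewrite eq_sym.
  have := fpriv x2 x x2M xX xx2 => /andP[H1 H2].
  by rewrite negb_or eq_sym H1 esym H2.
have YIR : IRset e Y by rewrite /IRset Yirr cardY XIR eqxx.
have MXY : M \subset X :\: Y.
  apply/subsetP => x xM; apply/setDP; split; first exact: (subsetP MX).
  rewrite /Y in_setU in_setD xM /=.
  apply/imsetP => -[x2 x2M Hx]; have := fnX x2 x2M; by rewrite -Hx (subsetP MX).
have H1 : #|M| <= IRdist e X Y := leq_trans (subset_leq_card MXY) (dist_bound _ e X Y).
have H2 : IRdist e X Y <= IRdiam e.
  have A1 : IRdist e X Y <= \max_(D' | IRset e D') IRdist e X D'.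
    exact: (leq_bigmax_cond (F := fun D' => IRdist e X D') Y YIR).
  have A2 : \max_(D' | IRset e D') IRdist e X D' <= IRdiam e.
    exact: (leq_bigmax_cond (F := fun D => \max_(D' | IRset e D') IRdist e D D') X HX).
  exact: leq_trans A1 A2.
rewrite -Sk; exact: leq_trans (subset_leq_card SM) (leq_trans H1 H2).
Qed.
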